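(* Let $m\ge 2$ be an integer and let $n$ be a positive integer with $m^j\le n<m^{j+1}$ for some integer $j\ge 0$. Write the base $m$ representation of $n$ as $n=\alpha_j m^j+\alpha_{j-1}m^{j-1}+\cdots+\alpha_1 m+\alpha_0$ with $\alpha_j>0$ and $0\le \alpha_i\le m-1$ for $0\le i\le j$. Then there is a one-to-one correspondence between the set $\mathcal{B}_m(n)$ of $m$-ary partitions of $n$ and the set of integer sequences \[ \mathcal{S}_m(n)=\{(\beta_j,\beta_{j-1},\ldots,\beta_1)\,:\,0\le \beta_j\le \alpha_j \text{ and } 0\le \beta_t\le \alpha_t+m\beta_{t+1}\text{ for } 1\le t\le j-1\}. \]
   Context: An $m$-ary partition of a positive integer $n$ is a partition of $n$ in which every part is a power of $m$ (i.e. $1,m,m^2,\ldots$). Equivalently, it is a sequence $(a_\ell,a_{\ell-1},\ldots,a_0)$ of integers with $a_\ell>0$, $a_i\ge 0$ for $0\le i\le \ell-1$, and $n=a_\ell m^\ell+\cdots+a_1 m+a_0$ ($a_i$ being the number of parts equal to $m^i$). $\mathcal{B}_m(n)$ denotes the set of all $m$-ary partitions of $n$. *)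

(* Defs.v *)
From mathcomp Require Import all_boot.
Set Implicit Arguments. Unset Strict Implicit. Unset Printing Implicit Defensive.

(* An m-ary partition of n, encoded little-endian: a = [:: a_0; a_1; ...; a_l]
   where a_i is the number of parts equal to m^i; we require a_l > 0
   (so a is nonempty) and n = sum_i a_i m^i. *)
Definition mary_partition (m n : nat) (a : seq nat) : Prop :=
  0 < last 0 a /\ n = \sum_(i < size a) nth 0 a i * m ^ i.

Definition digit (m n i : nat) : nat := (n %/ m ^ i) %% m.

(* The set S_m(n): sequences (beta_j, ..., beta_1), encoded as
   b = [:: beta_1; ...; beta_j], i.e. beta_t = nth 0 b t.-1. *)
Definition beta (b : seq nat) (t : nat) : nat := nth 0 b t.-1.

Definition S_seq (m n j : nat) (b : seq nat) : Prop :=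
  size b = j /\
  (0 < j -> beta b j <= digit m n j) /\
  (forall t, 1 <= t <= j.-1 -> beta b t <= digit m n t + m * beta b t.+1).

(* Main.v *)
Require Import Defs.
From mathcomp Require Import all_boot.
From mathcomp Require Import zify.
From Stdlib Require Import ProofIrrelevance.

Definition NN (m n t : nat) := n %/ m ^ t.

Lemma N_rec m n t : 0 < m -> NN m n t = digit m n t + m * NN m n t.+1.
Proof.
move=> hm; rewrite /NN /digit expnSr divnMA.
have := divn_eq (n %/ m ^ t) m. lia.
Qed.

Lemma N_top m n j : n < m ^ j.+1 -> NN m n j.+1 = 0.
Proof. by move=> h; rewrite /NN divn_small. Qed.

Lemma N0 m n : NN m n 0 = n.
Proof. by rewrite /NN expn0 divn1. Qed.

Lemma sumA m n k : 0 < m ->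
  \sum_(i < k) digit m n i * m ^ i + NN m n k * m ^ k = n.
Proof.
move=> hm; elim: k => [|k IH]; first by rewrite big_ord0 N0 expn0 muln1.
rewrite big_ord_recr /= -[in RHS]IH (@N_rec m n k hm) expnS.
set A := \sum_(i < k) _; set d := digit m n k; set N' := NN m n k.+1; set p := m ^ k.
rewrite mulnDl -!mulnA (mulnCA m N' p). lia.
Qed.

Definition Rel (m n j : nat) (x bb : nat -> nat) :=
  bb 0 = 0 /\ bb j.+1 = 0 /\
  forall t, t <= j -> x t + bb t = digit m n t + m * bb t.+1.

Lemma Rel_sum m n j x bb : 0 < m -> n < m ^ j.+1 -> Rel m n j x bb ->
  \sum_(i < j.+1) x i * m ^ i = n.
Proof.
move=> hm hn [h0 [hj hr]].
have inv : forall k, k <= j.+1 ->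
  \sum_(i < k) x i * m ^ i = \sum_(i < k) digit m n i * m ^ i + bb k * m ^ k.
  elim=> [|k IH] hk; first by rewrite !big_ord0 h0.
  rewrite !big_ord_recr /= IH ?(ltnW hk) //.
  have := hr k hk.
  set A := \sum_(i < k) _; set d := digit m n k; set b1 := bb k.+1; set p := m ^ k.
  rewrite expnS => e.
  have -> : x k * p = d * p + m * b1 * p - bb k * p by rewrite -!mulnDl -mulnBl -e addnK.
  have : bb k * p <= d * p + m * b1 * p by rewrite -mulnDl leq_mul2r -e leq_addl orbT.
  rewrite (mulnC m b1) -mulnA. lia.
have := inv j.+1 (leqnn _); rewrite hj mul0n addn0 => ->.
have := @sumA m n j.+1 hm; rewrite N_top // mul0n addn0 //.
Qed.

Lemma Rel_bb_unique m n j x b1 b2 : Rel m n j x b1 -> Rel m n j x b2 ->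
  forall t, t <= j.+1 -> b1 t = b2 t.
Proof.
move=> [_ [h1 r1]] [_ [h2 r2]].
have key : forall k, k <= j.+1 -> b1 (j.+1 - k) = b2 (j.+1 - k).
  elim=> [|k IH] hk; first by rewrite subn0 h1 h2.
  have e : (j.+1 - k.+1).+1 = j.+1 - k by lia.
  have ht : j.+1 - k.+1 <= j by lia.
  have := r1 _ ht; have := r2 _ ht; rewrite e IH ?(ltnW hk) //. lia.
move=> t ht; have := key (j.+1 - t) (leq_subr _ _); rewrite subKn //.
Qed.

Lemma Rel_ext m n j x1 x2 b1 b2 :
  (forall t, t <= j -> x1 t = x2 t) -> (forall t, t <= j.+1 -> b1 t = b2 t) ->
  Rel m n j x1 b1 -> Rel m n j x2 b2.
Proof.
move=> ex eb [h0 [hj hr]]; split; first by rewrite -eb.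
split; first by rewrite -eb.
move=> t ht; rewrite -ex // -!eb ?hr //; lia.
Qed.

Definition cc (m j : nat) (x : nat -> nat) (t : nat) : nat := \sum_(i < j.+1 - t) x (t + i) * m ^ i.

Lemma cc_rec m j x t : t <= j -> cc m j x t = x t + m * cc m j x t.+1.
Proof.
move=> ht; rewrite /cc subSn // big_ord_recl addn0 expn0 muln1 subSS big_distrr /=.
congr (_ + _); apply: eq_bigr => i _.
by rewrite /bump /= add1n addnS -addSn expnS mulnCA.
Qed.

Lemma cc_top m j x : cc m j x j.+1 = 0.
Proof. by rewrite /cc subnn big_ord0. Qed.

Lemma cc_sum (m j : nat) (x : nat -> nat) t : t <= j.+1 ->
  \sum_(i < t) x i * m ^ i + cc m j x t * m ^ t = \sum_(i < j.+1) x i * m ^ i.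
Proof.
elim: t => [|t IH] ht.
  by rewrite big_ord0 expn0 muln1 /cc subn0 add0n.
rewrite big_ord_recr /= -IH ?(ltnW ht) // (@cc_rec m j x t ht) expnS.
set A := \sum_(i < t) _; set c := cc m j x t.+1; set p := m ^ t.
rewrite mulnDl -!mulnA (mulnCA m c p); lia.
Qed.

Lemma sum_widen m (s : seq nat) K : size s <= K ->
  \sum_(i < size s) nth 0 s i * m ^ i = \sum_(i < K) nth 0 s i * m ^ i.
Proof.
move=> h; rewrite (big_ord_widen K (fun i => nth 0 s i * m ^ i) h) big_mkcond /=.
apply: eq_bigr => i _; case: ifP => // /negbT; rewrite -leqNgt => hi.
by rewrite nth_default.
Qed.

Lemma size_part m n j a : 1 < m -> n < m ^ j.+1 -> mary_partition m n a ->
  size a <= j.+1.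
Proof.
move=> hm hn [hl hs].
have sz : 0 < size a by case: a hl hs.
have hl' : (size a).-1 < size a by rewrite prednK.
have : m ^ (size a).-1 <= n.
  rewrite hs (bigD1 (Ordinal hl')) //= nth_last.
  apply: leq_trans (leq_addr _ _); by rewrite leq_pmull.
move=> h; have : m ^ (size a).-1 < m ^ j.+1 by apply: leq_ltn_trans hn.
rewrite ltn_exp2l //; lia.
Qed.

Definition bt m n j (a : seq nat) t := NN m n t - cc m j (nth 0 a) t.

Lemma Rel_F m n j a : 1 < m -> n < m ^ j.+1 -> mary_partition m n a ->
  Rel m n j (nth 0 a) (bt m n j a).
Proof.
move=> hm hn ha.
have hsz := @size_part m n j a hm hn ha.
have hsum : \sum_(i < j.+1) nth 0 a i * m ^ i = n.
  by case: ha => _ ->; rewrite (@sum_widen m a j.+1 hsz).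
have m0 : 0 < m by lia.
have cle : forall t, t <= j.+1 -> cc m j (nth 0 a) t <= NN m n t.
  move=> t ht; rewrite /NN leq_divRL ?expn_gt0 ?m0 //.
  by rewrite -hsum -(@cc_sum m j (nth 0 a) t ht) leq_addl.
split.
  rewrite /bt N0; have := @cc_sum m j (nth 0 a) 0 (leq0n j.+1).
  rewrite big_ord0 expn0 muln1 add0n hsum => ->; by rewrite subnn.
split; first by rewrite /bt cc_top N_top.
move=> t ht; rewrite /bt (@N_rec m n t m0) (@cc_rec m j (nth 0 a) t ht).
have := cle t.+1 ht; have := cle t (leqW ht).
rewrite (@N_rec m n t m0) (@cc_rec m j (nth 0 a) t ht) mulnBr.
have := leq_mul2l m (cc m j (nth 0 a) t.+1) (NN m n t.+1).
lia.
Qed.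

Fixpoint trim (s : seq nat) : seq nat :=
  if s is x :: s' then
    if (trim s' == [::]) && (x == 0) then [::] else x :: trim s'
  else [::].

Lemma nth_trim s i : nth 0 (trim s) i = nth 0 s i.
Proof.
elim: s i => [|x s IH] i //=.
case: ifP => [/andP [/eqP e /eqP ->]|_].
  by case: i => [|i] //=; rewrite -IH e nth_nil.
by case: i => [|i] //=.
Qed.

Lemma size_trim s : size (trim s) <= size s.
Proof. elim: s => [|x s IH] //=; case: ifP => //= _. Qed.

Lemma last_trim s : trim s = [::] \/ 0 < last 0 (trim s).
Proof.
elim: s => [|x s IH] /=; first by left.
case: ifP => [_|hx]; first by left.
right; move: IH => [e|]; first by move: hx; rewrite e eqxx /= => /negbT; lia.
by case: (trim s) => [|y t] //=.
Qed.

Lemma eq_trimmed s1 s2 : 0 < last 0 s1 -> 0 < last 0 s2 ->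
  (forall i, nth 0 s1 i = nth 0 s2 i) -> s1 = s2.
Proof.
move=> h1 h2 e.
suff hs : size s1 = size s2 by apply: (eq_from_nth hs) => i _; apply: e.
have gen : forall u v, 0 < last 0 v -> (forall i, nth 0 u i = nth 0 v i) ->
    ~ size u < size v.
  move=> u v hv euv hlt.
  have := euv (size v).-1; rewrite nth_last nth_default; first lia.
  lia.
case: (ltngtP (size s1) (size s2)) => // h.
- by case: (gen _ _ h2 e h).
- by case: (gen s2 s1 h1 (fun i => esym (e i)) h).
Qed.

Definition Fmap m n j (a : seq nat) : seq nat :=
  mkseq (fun k => bt m n j a k.+1) j.

Definition bbf (b : seq nat) (t : nat) : nat :=
  if t is t'.+1 then nth 0 b t' else 0.

Definition Gmap m n j (b : seq nat) : seq nat :=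
  trim (mkseq (fun t => digit m n t + m * bbf b t.+1 - bbf b t) j.+1).

Lemma F_ok m n j a : 1 < m -> n < m ^ j.+1 -> mary_partition m n a ->
  S_seq m n j (Fmap m n j a).
Proof.
move=> hm hn ha.
have [_ [htop hr]] := @Rel_F m n j a hm hn ha.
have hb : forall t, 1 <= t <= j -> beta (Fmap m n j a) t = bt m n j a t.
  move=> t ht; rewrite /beta /Fmap nth_mkseq; last lia.
  by rewrite prednK //; lia.
split; first by rewrite size_mkseq.
split.
  move=> hj; rewrite hb; last lia.
  have := hr j (leqnn j); rewrite htop muln0 addn0; lia.
move=> t ht; rewrite !hb; try lia.
have := hr t ltac:(lia); lia.
Qed.

Lemma Rel_G m n j b : S_seq m n j b ->
  Rel m n j (nth 0 (Gmap m n j b)) (bbf b).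
Proof.
move=> [hs [hj hr]].
split => //; split; first by rewrite /= nth_default // hs.
move=> t ht; rewrite /Gmap nth_trim nth_mkseq //.
suff : bbf b t <= digit m n t + m * bbf b t.+1 by lia.
case: t ht => [|t] ht //=.
case: (ltngtP t.+1 j) => h.
- have := hr t.+1 ltac:(lia). by rewrite /beta.
- lia.
- have := hj ltac:(lia); rewrite /beta -h /= (@nth_default _ 0 b t.+1); last by rewrite hs -h.
  by rewrite muln0 addn0.
Qed.

Lemma G_ok m n j b : 1 < m -> 0 < n -> n < m ^ j.+1 -> S_seq m n j b ->
  mary_partition m n (Gmap m n j b).
Proof.
move=> hm hn0 hn hb.
have hR := @Rel_G m n j b hb.
have hsz : size (Gmap m n j b) <= j.+1.
  by apply: leq_trans (size_trim _) _; rewrite size_mkseq.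
have hsum : n = \sum_(i < size (Gmap m n j b)) nth 0 (Gmap m n j b) i * m ^ i.
  rewrite (@sum_widen m _ j.+1 hsz); symmetry; apply: (@Rel_sum m n j _ _ _ hn hR); lia.
split => //.
case: (last_trim (mkseq (fun t => digit m n t + m * bbf b t.+1 - bbf b t) j.+1)) => // h.
move: hsum; rewrite /Gmap h big_ord0; lia.
Qed.

Lemma GF m n j a : 1 < m -> 0 < n -> n < m ^ j.+1 -> mary_partition m n a ->
  Gmap m n j (Fmap m n j a) = a.
Proof.
move=> hm hn0 hn ha.
have hS := @F_ok m n j a hm hn ha.
have hG := @G_ok m n j _ hm hn0 hn hS.
have R1 := @Rel_G m n j _ hS.
have R2 := @Rel_F m n j a hm hn ha.
have ebb : forall t, t <= j.+1 -> bt m n j a t = bbf (Fmap m n j a) t.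
  move=> [|t] ht /=; first by case: R2.
  case: (ltngtP t j) => h.
  - by rewrite /Fmap nth_mkseq.
  - lia.
  - rewrite nth_default ?size_mkseq ?h //; by case: R2 => _ [+ _].
have R3 := @Rel_ext m n j _ _ _ _ (fun t _ => erefl) ebb R2.
have s1 := @size_part m n j _ hm hn hG.
have s2 := @size_part m n j _ hm hn ha.
apply: eq_trimmed; [by move: hG => [? _] | by move: ha => [? _] | move=> i].
case: (leqP i j) => hi.
  case: R1 => _ [_ r1]; case: R3 => _ [_ r3].
  have := r1 i hi; have := r3 i hi; lia.
by rewrite !nth_default //; lia.
Qed.

Lemma FG m n j b : 1 < m -> 0 < n -> n < m ^ j.+1 -> S_seq m n j b ->
  Fmap m n j (Gmap m n j b) = b.
Proof.
move=> hm hn0 hn hb.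
have hG := @G_ok m n j _ hm hn0 hn hb.
have R1 := @Rel_G m n j _ hb.
have R2 := @Rel_F m n j _ hm hn hG.
have hs : size b = j by move: hb => [? _].
apply: (@eq_from_nth _ 0); first by rewrite size_mkseq hs.
move=> k; rewrite size_mkseq => hk.
rewrite /Fmap nth_mkseq //.
apply: (@Rel_bb_unique m n j _ _ _ R2 R1 k.+1); lia.
Qed.

Theorem theorem1p1 (m n j : nat) (hm : 2 <= m) (hn : 0 < n)
  (hj : m ^ j <= n < m ^ j.+1) :
  exists f : {a : seq nat | mary_partition m n a} -> {b : seq nat | S_seq m n j b},
    bijective f.
Proof.
have hn' : n < m ^ j.+1 by case/andP: hj.
exists (fun a => exist _ (Fmap m n j (sval a)) (@F_ok m n j _ hm hn' (svalP a))).
exists (fun b => exist _ (Gmap m n j (sval b)) (@G_ok m n j _ hm hn hn' (svalP b))).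
- move=> [a ha] /=; apply: subset_eq_compat; exact: GF.
- move=> [b hb] /=; apply: subset_eq_compat; exact: FG.
Qed.
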